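(* Let $\mathcal{S}=(\mathscr{X},\nabla)$ be a non-commutative spacetime. Then there exists an implication $\to_{\mathcal{S}}:\mathscr{X}^{op}\times\mathscr{X}\to\mathscr{X}$ on the monoidal poset $\mathscr{X}$ such that for all $a,b,c\in\mathscr{X}$, \[ a\otimes\nabla b\le c \iff b\le a\to_{\mathcal{S}} c . \]
   Context: A monoidal poset $(A,\le,\otimes,e)$ is a poset with a monoid structure $(A,\otimes,e)$ whose multiplication is order preserving in each argument. A quantale is a monoidal poset whose underlying poset has all (arbitrary) joins and whose multiplication distributes over arbitrary joins in each argument. A monotone map $f$ between monoidal posets is oplax monoidal if $f(e)\le e$ and $f(a\otimes b)\le f(a)\otimes f(b)$ for all $a,b$. A non-commutative spacetime is a pair $(\mathscr{X},\nabla)$ where $\mathscr{X}$ is a quantale and $\nabla:\mathscr{X}\to\mathscr{X}$ is a join-preserving oplax monoidal map. An implication on a monoidal poset $(A,\le,\otimes,e)$ is a function $\to:A^{op}\times A\to A$, order reversing in its first and order preserving in its second argument, such that $e\le a\to a$ and $(a\to b)\otimes(b\to c)\le a\to c$ for all $a,b,c\in A$. *)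

(* Defs.v *)
Set Implicit Arguments.

Section Defs.
Variable X : Type.
Variable le : X -> X -> Prop.

Definition is_poset : Prop :=
  (forall a, le a a) /\
  (forall a b, le a b -> le b a -> a = b) /\
  (forall a b c, le a b -> le b c -> le a c).

Definition is_join (S : X -> Prop) (j : X) : Prop :=
  (forall s, S s -> le s j) /\
  (forall u, (forall s, S s -> le s u) -> le j u).

Definition image (f : X -> X) (S : X -> Prop) : X -> Prop :=
  fun y => exists x, S x /\ y = f x.

Variable mul : X -> X -> X.
Variable e : X.

Definition is_monoidal_poset : Prop :=
  is_poset /\
  (forall a b c, mul (mul a b) c = mul a (mul b c)) /\
  (forall a, mul e a = a) /\ (forall a, mul a e = a) /\
  (forall a a' b, le a a' -> le (mul a b) (mul a' b)) /\
  (forall a b b', le b b' -> le (mul a b) (mul a b')).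

Definition is_quantale : Prop :=
  is_monoidal_poset /\
  (forall S : X -> Prop, exists j, is_join S j) /\
  (forall (a : X) (S : X -> Prop) (j : X), is_join S j ->
      is_join (image (mul a) S) (mul a j)) /\
  (forall (a : X) (S : X -> Prop) (j : X), is_join S j ->
      is_join (image (fun s => mul s a) S) (mul j a)).

Definition is_oplax_monoidal (f : X -> X) : Prop :=
  (forall a b, le a b -> le (f a) (f b)) /\
  le (f e) e /\
  (forall a b, le (f (mul a b)) (mul (f a) (f b))).

Definition preserves_joins (f : X -> X) : Prop :=
  forall (S : X -> Prop) (j : X), is_join S j -> is_join (image f S) (f j).

Definition is_nc_spacetime (nabla : X -> X) : Prop :=
  is_quantale /\ preserves_joins nabla /\ is_oplax_monoidal nabla.

Definition is_implication (imp : X -> X -> X) : Prop :=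
  (forall a a' b, le a a' -> le (imp a' b) (imp a b)) /\
  (forall a b b', le b b' -> le (imp a b) (imp a b')) /\
  (forall a, le e (imp a a)) /\
  (forall a b c, le (mul (imp a b) (imp b c)) (imp a c)).

End Defs.

(* Main.v *)
Require Import Defs.
From Stdlib Require Import ClassicalEpsilon.

Theorem theorem5p7 (X : Type) (le : X -> X -> Prop) (mul : X -> X -> X) (e : X)
    (nabla : X -> X) :
  is_nc_spacetime le mul e nabla ->
  exists imp : X -> X -> X,
    is_implication le mul e imp /\
    (forall a b c : X, le (mul a (nabla b)) c <-> le b (imp a c)).
Proof.
  intros [[[[Hrefl [Hanti Htrans]] [Hassoc [Hel [Her [Hml Hmr]]]]] [Hjoin [HdL HdR]]]
          [Hnj [Hnmon [Hne Hnmul]]]].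
  pose (J := fun S : X -> Prop => proj1_sig (constructive_indefinite_description _ (Hjoin S))).
  assert (HJ : forall S, is_join le S (J S)).
  { intro S. unfold J. exact (proj2_sig (constructive_indefinite_description _ (Hjoin S))). }
  pose (imp := fun a c => J (fun b => le (mul a (nabla b)) c)).
  assert (Hadj : forall a b c, le (mul a (nabla b)) c <-> le b (imp a c)).
  { intros a b c. split.
    - intro H. apply (proj1 (HJ _)). exact H.
    - intro H.
      assert (Hc : le (mul a (nabla (imp a c))) c).
      { destruct (Hnj _ _ (HJ (fun b => le (mul a (nabla b)) c))) as [_ Hl].
        pose proof (HdL a _ _ (Hnj _ _ (HJ (fun b => le (mul a (nabla b)) c)))) as [_ Hl2].
        apply Hl2. intros s [y [[x [Hx ->]] ->]]. exact Hx. }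
      eapply Htrans; [| exact Hc]. apply Hmr. apply Hnmon. exact H. }
  assert (Hcu : forall a c, le (mul a (nabla (imp a c))) c).
  { intros a c. apply Hadj. apply Hrefl. }
  exists imp. split; [| exact Hadj].
  split; [| split; [| split]].
  - intros a a' b H. apply Hadj. eapply Htrans; [apply Hml; exact H | apply Hcu].
  - intros a b b' H. apply Hadj. eapply Htrans; [apply Hcu | exact H].
  - intros a. apply Hadj. eapply Htrans; [apply Hmr; exact Hne |]. rewrite Her. apply Hrefl.
  - intros a b c. apply Hadj.
    eapply Htrans; [apply Hmr; apply Hnmul |]. rewrite <- Hassoc.
    eapply Htrans; [apply Hml; apply Hcu | apply Hcu].
Qed.
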